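(* Work in a polymorphically typed functional language (a polymorphic lambda-calculus with Haskell-like datatypes; possibly with undefinedness $\bot$ and partial functions, and possibly with Haskell's $\mathit{seq}$) for which the relational parametricity theorem holds. Let $\tau$, $\tau_1$, $\tau_2$ be closed types, and let $g :: \tau_1 \to \tau_2$ be a closed term which is (i) strict, if the language setting includes partially defined functions, and (ii) strict and total, if the language setting includes $\mathit{seq}$. Let $e :: \tau$ be a term which may involve the type variable $\alpha$ (but $\alpha$ does not occur in its overall type $\tau$, which is closed) and which may contain the term variables $\mathit{pre} :: \tau_1 \to \alpha$ and $\mathit{post} :: \alpha \to \tau_2$, but no other free (type or term) variables. Then \[ e[\tau_1/\alpha,\ \mathit{id}_{\tau_1}/\mathit{pre},\ g/\mathit{post}] \;=\; e[\tau_2/\alpha,\ g/\mathit{pre},\ \mathit{id}_{\tau_2}/\mathit{post}], \] where $e[\cdot/\cdot]$ denotes simultaneous substitution and $=$ is semantic equality.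
   Context: The relational parametricity theorem (fundamental lemma of logical relations) is assumed to hold for the language: types are interpreted as relations $\Delta_{\rho,\sigma}$, with base types as identity relations, function types via $(f,g)\in \mathcal{R}_1\to\mathcal{R}_2$ iff $f$ maps $\mathcal{R}_1$-related arguments to $\mathcal{R}_2$-related results (with the additional requirement $f=\bot \Leftrightarrow g=\bot$ when $\mathit{seq}$ is present), datatype constructors via corresponding relational liftings, and type variables interpreted by admissible relations $\mathcal{R}$ between closed types (strict, i.e. $(\bot,\bot)\in\mathcal{R}$, in the presence of partiality; strict and total, i.e. $(a,b)\in\mathcal{R}$ implies $a=\bot\Leftrightarrow b=\bot$, in the presence of $\mathit{seq}$); the theorem says every term, with free term variables instantiated by related closed terms, is related to itself at the relational interpretation of its type, and for closed types this relation is the identity. A function $g$ is strict if $g\,\bot=\bot$, and total if $g\,x=\bot$ implies $x=\bot$. $\mathit{id}_{\tau}$ denotes the identity function on type $\tau$. *)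

(* Defs.v *)
(* Abstract denotational model of a polymorphic functional language:
   closed types denote pointed omega-CPOs (in the settings with bottom),
   function types come with (continuous) application, identity functions
   and a bottom function.  A term e :: tau with free type variable alpha and
   free term variables pre :: tau1 -> alpha, post :: alpha -> tau2 is
   modelled by its denotation as a family indexed by the instantiation of
   alpha and the values of pre and post.  Relational parametricity of e is
   assumed via the predicate [Parametric] below (the fundamental lemma
   instantiated at the type of e, whose closed result type is interpreted
   as the identity relation). *)

Set Implicit Arguments.

Inductive setting := Total | Partial | WithSeq.

Record Model (s : setting) := {
  ty : Type;
  el : ty -> Type;
  arr : ty -> ty -> ty;
  app : forall a b, el (arr a b) -> el a -> el b;
  idf : forall a, el (arr a a);
  app_id : forall a (x : el a), app (idf a) x = x;
  le : forall a, el a -> el a -> Prop;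
  bot : forall a, el a;
  lub : forall a, (nat -> el a) -> el a;
  le_refl : s <> Total -> forall a (x : el a), le x x;
  le_trans : s <> Total -> forall a (x y z : el a), le x y -> le y z -> le x z;
  le_antisym : s <> Total -> forall a (x y : el a), le x y -> le y x -> x = y;
  bot_least : s <> Total -> forall a (x : el a), le (bot a) x;
  lub_ub : s <> Total -> forall a (c : nat -> el a),
      (forall n, le (c n) (c (S n))) -> forall n, le (c n) (lub c);
  lub_least : s <> Total -> forall a (c : nat -> el a) (u : el a),
      (forall n, le (c n) (c (S n))) -> (forall n, le (c n) u) -> le (lub c) u;
  app_cont : s <> Total -> forall a b (f : el (arr a b)) (c : nat -> el a),
      (forall n, le (c n) (c (S n))) ->
      app f (lub c) = lub (fun n => app f (c n));
  app_bot : s <> Total -> forall a b (x : el a), app (bot (arr a b)) x = bot b;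
  (* Haskell-98-like datatypes: every closed type has a defined value *)
  nontrivial : s = WithSeq -> forall a, exists x : el a, x <> bot a
}.

Arguments ty {s} _.
Arguments el {s} _ _.
Arguments arr {s} _ _ _.
Arguments app {s} _ {a b} _ _.
Arguments idf {s} _ a.
Arguments le {s} _ {a} _ _.
Arguments bot {s} _ a.
Arguments lub {s} _ {a} _.

Section Rel.
Variables (s : setting) (M : Model s).

Definition is_chain {a : ty M} (c : nat -> el M a) : Prop :=
  forall n, le M (c n) (c (S n)).

Definition strict_rel {a b : ty M} (R : el M a -> el M b -> Prop) : Prop :=
  R (bot M a) (bot M b).

Definition total_rel {a b : ty M} (R : el M a -> el M b -> Prop) : Prop :=
  forall x y, R x y -> (x = bot M a <-> y = bot M b).

Definition chain_closed {a b : ty M} (R : el M a -> el M b -> Prop) : Prop :=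
  forall (c1 : nat -> el M a) (c2 : nat -> el M b), is_chain c1 -> is_chain c2 -> (forall n, R (c1 n) (c2 n)) ->
    R (lub M c1) (lub M c2).

Definition allowed_rel {a b : ty M} (R : el M a -> el M b -> Prop) : Prop :=
  match s with
  | Total => True
  | Partial => strict_rel R /\ chain_closed R
  | WithSeq => strict_rel R /\ total_rel R /\ chain_closed R
  end.

Definition fun_rel {a1 a2 b1 b2 : ty M}
    (R1 : el M a1 -> el M a2 -> Prop) (R2 : el M b1 -> el M b2 -> Prop)
    (f : el M (arr M a1 b1)) (g : el M (arr M a2 b2)) : Prop :=
  (forall x y, R1 x y -> R2 (app M f x) (app M g y)) /\
  (s = WithSeq -> (f = bot M _ <-> g = bot M _)).

(* Identity relation (interpretation of closed types). *)
Definition Eqr {a : ty M} (x y : el M a) : Prop := x = y.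

Definition Parametric {t t1 t2 : ty M}
    (e : forall a : ty M, el M (arr M t1 a) -> el M (arr M a t2) -> el M t) : Prop :=
  forall (a b : ty M) (R : el M a -> el M b -> Prop), allowed_rel R ->
  forall p1 p2 q1 q2,
    fun_rel (@Eqr t1) R p1 p2 -> fun_rel R (@Eqr t2) q1 q2 ->
    e a p1 q1 = e b p2 q2.

Definition strict_fun {a b : ty M} (g : el M (arr M a b)) : Prop :=
  app M g (bot M a) = bot M b.

Definition total_fun {a b : ty M} (g : el M (arr M a b)) : Prop :=
  forall x, app M g x = bot M b -> x = bot M a.

End Rel.

(* Main.v *)
Require Import Defs.
From Stdlib Require Import FunctionalExtensionality.

Theorem lemma1 (s : setting) (M : Model s) (t t1 t2 : ty M)
    (g : el M (arr M t1 t2))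
    (e : forall a : ty M, el M (arr M t1 a) -> el M (arr M a t2) -> el M t) :
  (s = Partial -> strict_fun M g) ->
  (s = WithSeq -> strict_fun M g /\ total_fun M g) ->
  Parametric M e ->
  e t1 (idf M t1) g = e t2 g (idf M t2).
Proof.
  intros HP HS Hpar.
  set (R := fun (x : el M t1) (y : el M t2) => app M g x = y).
  assert (Hcc : s <> Total -> chain_closed M R).
  { intros Hn c1 c2 H1 H2 Hc. unfold R in *.
    rewrite (app_cont M Hn _ _ g _ H1).
    f_equal. apply functional_extensionality. exact Hc. }
  assert (Hnb : s = WithSeq -> idf M t1 <> bot M _ /\ g <> bot M _ /\ idf M t2 <> bot M _).
  { intros Hw. assert (Hn : s <> Total) by congruence.
    destruct (HS Hw) as [Hst Htot].
    destruct (nontrivial M Hw t1) as [x Hx].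
    destruct (nontrivial M Hw t2) as [y Hy].
    split; [|split]; intro Hb.
    3: { apply Hy. rewrite <- (app_id M _ y), Hb. exact (app_bot M Hn _ _ y). }
    - apply Hx. rewrite <- (app_id M _ x), Hb. exact (app_bot M Hn _ _ x).
    - apply Hx. apply Htot. rewrite Hb. exact (app_bot M Hn _ _ x). }
  apply (Hpar t1 t2 R).
  - unfold allowed_rel. destruct s eqn:Es.
    + exact I.
    + split. apply HP; reflexivity. apply Hcc; discriminate.
    + destruct (HS eq_refl) as [Hst Htot]. split; [exact Hst|split].
      * intros x y Hxy. unfold R in Hxy. subst y. split.
        -- intros ->. exact Hst.
        -- apply Htot.
      * apply Hcc; discriminate.
  - split.
    + intros x y Hxy. unfold Eqr in Hxy. subst y. unfold R. rewrite app_id. reflexivity.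
    + intros Hw. destruct (Hnb Hw). tauto.
  - split.
    + intros x y Hxy. unfold R in Hxy. unfold Eqr. rewrite app_id. exact Hxy.
    + intros Hw. destruct (Hnb Hw). tauto.
Qed.
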